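(* Let $\beta,\psi_0$ be real constants, $\kappa>0$, $K\neq0$, and $I=\{r>0: r>4K\}$. Set $\tilde{\mathcal{C}}\equiv0$, $\mathcal{V}\equiv0$, $\mathcal{A}(\psi)=\frac{3\beta}{8}\psi^2$, $C(r)=1$, $$A(r)=2-\frac{r}{2K}+\frac{\sqrt{r(r-4K)}}{2K},\qquad \psi(r)=\frac{\psi_0\big(\sqrt{r(r-4K)}-4K+r\big)\big(\sqrt{r(r-4K)}-2K+r\big)^{1/4}}{3K\,r^{3/4}\sqrt{r-4K}} .$$ Then $E^{(1)}_{tt}=E^{(1)}_{rr}=E^{(1)}_{\vartheta\vartheta}=E^{(1)}_{\psi}=0$ hold on $I$. (The metric ${\rm d}s^2=A^2{\rm d}t^2-A^{-2}{\rm d}r^2-r^2{\rm d}\Omega^2$ is asymptotically flat, with $A(r)\to1$ as $r\to\infty$, and for $K>0$ has a horizon $A(4K)=0$.)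
   Context: Metric ansatz ${\rm d}s^2=A(r)^2{\rm d}t^2-\frac{C(r)^2}{A(r)^2}{\rm d}r^2-r^2{\rm d}\Omega^2$, $\psi=\psi(r)$. Primes on $A,C,\psi$ are $r$-derivatives; $\mathcal{A}',\tilde{\mathcal{C}}',\tilde{\mathcal{C}}'',\mathcal{V}'$ are $\psi$-derivatives evaluated at $\psi(r)$. The real-tetrad reduced vacuum field equations of the scalar-torsion theory are: $E^{(1)}_{tt}:\ 0=\mathcal{A}\frac{A^2(-2rACA'-A^2(C-2rC')+C^3)}{r^2C^3}+\tilde{\mathcal{C}}'\Big(\frac{A^4\psi''}{C^2}-\frac{A^3\psi'(-rCA'+rAC'-2C^2)}{rC^3}\Big)-\frac{2A^3(A-C)\psi'\mathcal{A}'}{rC^2}+\frac{A^4\psi'^2\tilde{\mathcal{C}}''}{C^2}-\frac{\beta A^4\psi'^2}{2C^2}+\kappa^2A^2\mathcal{V}$; $E^{(1)}_{rr}:\ 0=-\frac{(2rAA'+A^2-C^2)\mathcal{A}}{r^2A^2}+\big(\frac{A'}{A}+\frac2r\big)\psi'\tilde{\mathcal{C}}'+\frac{\kappa^2C^2\mathcal{V}}{A^2}+\frac12\beta\psi'^2$; $E^{(1)}_{\vartheta\vartheta}:\ 0=-\frac{A\psi'(rA'+A-C)\mathcal{A}'}{rC^2}+\tilde{\mathcal{C}}'\Big(\frac{A\psi'(rCA'-rAC'+C^2)}{rC^3}+\frac{A^2\psi''}{C^2}\Big)+\frac{\mathcal{A}(-rCA'^2+A(rA'C'-C(rA''+2A'))+A^2C')}{rC^3}+\frac{A^2\psi'^2\tilde{\mathcal{C}}''}{C^2}-\frac{\beta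 A^2\psi'^2}{2C^2}+\kappa^2\mathcal{V}$; $E^{(1)}_{\psi}:\ 0=\frac{(A-C)(2rA'+A-C)\mathcal{A}'}{r^2C^2}+\frac{\beta A\psi'(2rCA'+A(2C-rC'))}{rC^3}+\frac{\beta A^2\psi''}{C^2}+\kappa^2\mathcal{V}'+\frac{\tilde{\mathcal{C}}'(rCA'(rA'-2C)+A(-r^2A'C'+rC(rA''+6A')-2C^2)+2A^2(C-rC'))}{r^2C^3}$. *)

(* Defs.v *)
From Stdlib Require Import Reals.
From Coquelicot Require Import Coquelicot.
Open Scope R_scope.

(* Reduced vacuum field equations of the scalar-torsion theory (real tetrad).
   A C psi : R -> R are the metric functions and scalar field (functions of r);
   cA cCt cV : R -> R are the theory functions calA, tilde C, V (functions of psi);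
   primes on A, C, psi are r-derivatives, primes on cA, cCt, cV are
   psi-derivatives evaluated at psi(r).  Each definition is the right-hand side
   of "0 = ..." at radius r. *)
Section FieldEqs.
Variables (beta kappa : R) (cA cCt cV A C psi : R -> R) (r : R).

Let a   := A r.
Let a1  := Derive A r.
Let a2  := Derive (Derive A) r.
Let c   := C r.
Let c1  := Derive C r.
Let p1  := Derive psi r.
Let p2  := Derive (Derive psi) r.
Let cA0 := cA (psi r).
Let cA1 := Derive cA (psi r).
Let Ct1 := Derive cCt (psi r).
Let Ct2 := Derive (Derive cCt) (psi r).
Let V0  := cV (psi r).
Let V1  := Derive cV (psi r).

Definition E_tt : R :=
  cA0 * (a^2 * (-2 * r * a * c * a1 - a^2 * (c - 2 * r * c1) + c^3) / (r^2 * c^3))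
  + Ct1 * (a^4 * p2 / c^2 - a^3 * p1 * (- r * c * a1 + r * a * c1 - 2 * c^2) / (r * c^3))
  - 2 * a^3 * (a - c) * p1 * cA1 / (r * c^2)
  + a^4 * p1^2 * Ct2 / c^2
  - beta * a^4 * p1^2 / (2 * c^2)
  + kappa^2 * a^2 * V0.

Definition E_rr : R :=
  - (2 * r * a * a1 + a^2 - c^2) * cA0 / (r^2 * a^2)
  + (a1 / a + 2 / r) * p1 * Ct1
  + kappa^2 * c^2 * V0 / a^2
  + 1/2 * beta * p1^2.

Definition E_thth : R :=
  - a * p1 * (r * a1 + a - c) * cA1 / (r * c^2)
  + Ct1 * (a * p1 * (r * c * a1 - r * a * c1 + c^2) / (r * c^3) + a^2 * p2 / c^2)
  + cA0 * (- r * c * a1^2 + a * (r * a1 * c1 - c * (r * a2 + 2 * a1)) + a^2 * c1)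
      / (r * c^3)
  + a^2 * p1^2 * Ct2 / c^2
  - beta * a^2 * p1^2 / (2 * c^2)
  + kappa^2 * V0.

Definition E_psi : R :=
  (a - c) * (2 * r * a1 + a - c) * cA1 / (r^2 * c^2)
  + beta * a * p1 * (2 * r * c * a1 + a * (2 * c - r * c1)) / (r * c^3)
  + beta * a^2 * p2 / c^2
  + kappa^2 * V1
  + Ct1 * (r * c * a1 * (r * a1 - 2 * c)
           + a * (- r^2 * a1 * c1 + r * c * (r * a2 + 6 * a1) - 2 * c^2)
           + 2 * a^2 * (c - r * c1)) / (r^2 * c^3).

End FieldEqs.

Definition solA (K r : R) : R :=
  2 - r / (2 * K) + sqrt (r * (r - 4 * K)) / (2 * K).

Definition solpsi (K psi0 r : R) : R :=
  psi0 * (sqrt (r * (r - 4 * K)) - 4 * K + r)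
       * Rpower (sqrt (r * (r - 4 * K)) - 2 * K + r) (1/4)
  / (3 * K * Rpower r (3/4) * sqrt (r - 4 * K)).

(* Main.v *)
Require Import Defs.
From Stdlib Require Import Reals Lra Psatz.
From Coquelicot Require Import Coquelicot.
Open Scope R_scope.

Definition Dom (K y : R) : Prop := 0 < y /\ 4 * K < y.
Definition W (K y : R) : R := sqrt (1 - 4 * K / y).
Definition FA (K y : R) : R := 2 * W K y / (1 + W K y).
Definition FP (K c0 y : R) : R := c0 * (1 + W K y) * sqrt (1 + W K y).

Lemma open_Dom K : open (Dom K).
Proof. apply open_and; [apply open_gt| apply open_gt]. Qed.

Lemma W_pos K y : Dom K y -> 0 < W K y.
Proof. intros [H1 H2]. unfold W. apply sqrt_lt_R0.
  assert (4*K/y < 1). { apply (Rmult_lt_reg_r y); auto. field_simplify; lra. } lra. Qed.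

Lemma W_sq K y : Dom K y -> W K y * W K y = 1 - 4 * K / y.
Proof. intros [H1 H2]. unfold W. apply sqrt_sqrt.
  assert (4*K/y < 1). { apply (Rmult_lt_reg_r y); auto. field_simplify; lra. } lra. Qed.

Lemma K_eq K y : Dom K y -> K = y * (1 - W K y * W K y) / 4.
Proof. intros H. rewrite W_sq by auto. destruct H. field. lra. Qed.

Lemma eqA K y : K <> 0 -> Dom K y -> solA K y = FA K y.
Proof. intros hK H. pose proof (W_pos K y H) as Wp. pose proof (K_eq K y H) as HK.
  destruct H as [H1 H2]. unfold solA, FA.
  set (w := W K y) in *. clearbody w. subst K.
  assert (sqrt (y * (y - 4 * (y * (1 - w * w) / 4))) = y * w) as ->.
  { rewrite <- (sqrt_pow2 (y * w)) by nra. f_equal. field. }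
  field. split; [lra|split;[|lra]].
  intro h. apply hK. rewrite h. field.
Qed.

Definition c0 (K psi0 : R) : R := psi0 / (3 * K) * exp (- (1/4) * ln 2).

Lemma exp3 L : exp (3/4 * L) = exp (L/4) ^ 3.
Proof. replace (3/4*L) with (L/4 + (L/4 + L/4)) by field. rewrite !exp_plus. ring. Qed.

Lemma eqP K psi0 y : K <> 0 -> Dom K y -> solpsi K psi0 y = FP K (c0 K psi0) y.
Proof. intros hK H. pose proof (W_pos K y H) as Wp. pose proof (K_eq K y H) as HK.
  destruct H as [H1 H2]. unfold solpsi, FP, c0.
  assert (sqrt (1 + W K y) = exp (/2 * ln (1 + W K y))) as ->.
  { rewrite <- Rpower_sqrt by lra. reflexivity. }
  set (w := W K y) in *. clearbody w. subst K.
  assert (sqrt (y * (y - 4 * (y * (1 - w * w) / 4))) = y * w) as ->.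
  { rewrite <- (sqrt_pow2 (y * w)) by nra. f_equal. field. }
  pose proof (exp_ln y H1) as Ey.
  assert (Ep: 0 < exp (ln y / 4)) by apply exp_pos.
  assert (E4 : y = exp (ln y / 4) ^ 4).
  { rewrite <- Ey at 1. replace (ln y) with (ln y/4 + (ln y/4 + (ln y/4 + ln y/4))) at 1 by field.
    rewrite !exp_plus. ring. }
  assert (sqrt (y - 4 * (y * (1 - w * w) / 4)) = exp (ln y / 4) ^ 2 * w) as ->.
  { rewrite <- (sqrt_pow2 (exp (ln y / 4) ^ 2 * w)) by nra. f_equal. transitivity (y*(w*w)); [field| rewrite E4 at 1; ring]. }
  unfold Rpower. rewrite exp3.
  replace (y * w - 2 * (y * (1 - w * w) / 4) + y) with (y * ((1 + w) ^ 2 * / 2)) by field.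
  rewrite ln_mult, ln_mult, ln_pow, ln_Rinv by (try apply Rinv_0_lt_compat; nra).
  replace (1 / 4 * (ln y + (INR 2 * ln (1 + w) + - ln 2))) with
    (ln y / 4 + (/2 * ln (1 + w) + - (1/4) * ln 2)) by (simpl; field).
  rewrite !exp_plus.
  set (E := exp (ln y / 4)) in *. set (T := exp (/2 * ln (1 + w))).
  set (Q := exp (- (1/4) * ln 2)).
  assert (1 - w*w <> 0).
  { intro h. apply hK. rewrite h. field. }
  rewrite E4. field. repeat split; lra.
Qed.
Definition Wd K y := 2 * K / (y^2 * W K y).
Definition W2 K y := Wd K y * (-2 / y - Wd K y / W K y).
Definition GA K y := 2 * Wd K y / (1 + W K y)^2.
Definition GA2 K y := 2 * W2 K y / (1 + W K y)^2 - 4 * Wd K y ^ 2 / (1 + W K y)^3.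
Definition GP K c y := c * (3/2) * sqrt (1 + W K y) * Wd K y.
Definition GP2 K c y := c * (3/2) * (Wd K y ^ 2 / (2 * sqrt (1 + W K y)) + sqrt (1 + W K y) * W2 K y).

Lemma Wlt K y : Dom K y -> 0 < 1 - 4 * K / y.
Proof. intro H. pose proof (W_pos K y H). pose proof (W_sq K y H). nra. Qed.

Ltac nz := lazymatch goal with |- _ * _ <> 0 => apply Rmult_integral_contrapositive_currified; nz | |- _ => lra end.
Ltac sp := repeat split; nz.

Ltac prep K y H :=
  pose proof (W_pos K y H) as Wp; pose proof (Wlt K y H) as Wl;
  pose proof (Rlt_le _ _ Wl) as Wle;
  destruct H as [H1 H2]; unfold FA, GA, GA2, FP, GP, GP2, W2, Wd, W in *;
  auto_derive;
  change (1 + - (4*K*/y)) with (1 - 4*K/y) in *;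
  set (w := sqrt (1 - 4*K/y)) in *;
  try (assert (Sp : 0 < sqrt (1 + w)) by (apply sqrt_lt_R0; lra);
       assert (Ss : sqrt (1 + w) * sqrt (1 + w) = 1 + w) by (apply sqrt_sqrt; lra);
       set (S := sqrt (1 + w)) in *);
  try sp;
  try (field; sp); try (match goal with Hs : _ * _ = 1 + _ |- _ => rewrite <- Hs end; field; sp).

Lemma dFA K y : Dom K y -> is_derive (FA K) y (GA K y).
Proof. intros H. prep K y H. Qed.
Lemma dGA K y : Dom K y -> is_derive (GA K) y (GA2 K y).
Proof. intros H. prep K y H. Qed.
Lemma dFP K c y : Dom K y -> is_derive (FP K c) y (GP K c y).
Proof. intros H. prep K y H. Qed.
Lemma dGP K c y : Dom K y -> is_derive (GP K c) y (GP2 K c y).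
Proof. intros H. prep K y H. Qed.

Lemma loc_Dom K y : Dom K y -> locally y (Dom K).
Proof. intro H. exact (open_Dom K y H). Qed.

Lemma DA K y : K <> 0 -> Dom K y -> Derive (solA K) y = GA K y.
Proof. intros hK H. rewrite (Derive_ext_loc _ (FA K)).
  - apply is_derive_unique, dFA; auto.
  - apply (filter_imp (Dom K)); [intros; apply eqA; auto | apply loc_Dom; auto]. Qed.

Lemma DDA K y : K <> 0 -> Dom K y -> Derive (Derive (solA K)) y = GA2 K y.
Proof. intros hK H. rewrite (Derive_ext_loc _ (GA K)).
  - apply is_derive_unique, dGA; auto.
  - apply (filter_imp (Dom K)); [intros; apply DA; auto | apply loc_Dom; auto]. Qed.

Lemma DP K psi0 y : K <> 0 -> Dom K y -> Derive (solpsi K psi0) y = GP K (c0 K psi0) y.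
Proof. intros hK H. rewrite (Derive_ext_loc _ (FP K (c0 K psi0))).
  - apply is_derive_unique, dFP; auto.
  - apply (filter_imp (Dom K)); [intros; apply eqP; auto | apply loc_Dom; auto]. Qed.

Lemma DDP K psi0 y : K <> 0 -> Dom K y ->
  Derive (Derive (solpsi K psi0)) y = GP2 K (c0 K psi0) y.
Proof. intros hK H. rewrite (Derive_ext_loc _ (GP K (c0 K psi0))).
  - apply is_derive_unique, dGP; auto.
  - apply (filter_imp (Dom K)); [intros; apply DP; auto | apply loc_Dom; auto]. Qed.

Lemma DcA beta p : Derive (fun p : R => 3 * beta / 8 * p^2) p = 3 * beta / 4 * p.
Proof. apply is_derive_unique. auto_derive; auto. field. Qed.

Lemma D0 x : Derive (Derive (fun _ : R => 0)) x = 0.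
Proof. rewrite (Derive_ext _ (fun _ => 0)); apply Derive_const. Qed.

Theorem mainTheorem6 (beta psi0 kappa K : R) (hkappa : 0 < kappa) (hK : K <> 0) :
  forall r : R, 0 < r -> 4 * K < r ->
    let cA  := fun p : R => 3 * beta / 8 * p^2 in
    let cCt := fun _ : R => 0 in
    let cV  := fun _ : R => 0 in
    let C   := fun _ : R => 1 in
    let A   := solA K in
    let psi := solpsi K psi0 in
    E_tt   beta kappa cA cCt cV A C psi r = 0 /\
    E_rr   beta kappa cA cCt cV A C psi r = 0 /\
    E_thth beta kappa cA cCt cV A C psi r = 0 /\
    E_psi  beta kappa cA cCt cV A C psi r = 0.
Proof.
  intros r Hr H4 cA cCt cV C A psi.
  assert (HD : Dom K r) by (split; auto).
  unfold E_tt, E_rr, E_thth, E_psi, cA, cCt, cV, C, A, psi.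
  rewrite !DcA, !D0, !Derive_const, DDA, DA, DDP, DP, eqA, eqP by auto.
  pose proof (W_pos K r HD) as Wp. pose proof (K_eq K r HD) as HK.
  pose proof (W_sq K r HD) as Ws.
  assert (Sp : 0 < sqrt (1 + W K r)) by (apply sqrt_lt_R0; lra).
  assert (Ss : sqrt (1 + W K r) * sqrt (1 + W K r) = 1 + W K r) by (apply sqrt_sqrt; lra).
  unfold FA, FP, GA, GA2, GP, GP2, W2, Wd.
  set (c := c0 K psi0). clearbody c.
  set (S := sqrt (1 + W K r)) in *. clearbody S.
  set (w := W K r) in *. clearbody w.
  subst K.
  assert (Hw : w = S * S - 1) by lra. subst w.
  repeat split; field; sp.
Qed.
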